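(* Let $q\ge 1$ and $t\ge0$ be integers. (1) If a code $\mathcal{C}\subseteq\mathcal{S}_{\mathrm{all}}^q$ is a $2t$-tail-deletion-correcting code, then it is a $t$-tail-indel-correcting code. However, the converse does not hold in general: there exist $q$, $t$ and a code $\mathcal{C}\subseteq\mathcal{S}_{\mathrm{all}}^q$ that is $t$-tail-indel-correcting but not $2t$-tail-deletion-correcting. (2) For every integer $t\ge1$ there exist an integer $q$ and a code $\mathcal{C}\subseteq\mathcal{S}_{\mathrm{all}}^q$ that is a $(2t-1)$-tail-deletion-correcting code but not a $t$-tail-indel-correcting code.
   Context: Let $[q]=\{0,1,\dots,q-1\}$. For $1\le m\le q$, a partial permutation of length $m$ over $[q]$ is a sequence $\pi=(\pi_1,\dots,\pi_m)$ of $m$ pairwise distinct elements of $[q]$. Let $\mathcal{S}_m^q$ be the set of those of length $m$ and $\mathcal{S}_{\mathrm{all}}^q=\bigcup_{m=1}^{q}\mathcal{S}_m^q$. A code is any subset of $\mathcal{S}_{\mathrm{all}}^q$. Tail deletions: for $\pi$ of length $m$ and integer $j\ge 0$, $\pi_{\downarrow j}=(\pi_{k+1},\dots,\pi_m)$ with $k=\min(j,m-1)$ (leftmost symbols are deleted; the last symbol is never deleted); $\mathcal{B}_{\mathrm{del}}^t(\pi)=\{\pi_{\downarrow j}:0\le j\le t\}$. Tail indels: $\mathcal{B}_{\mathrm{indel}}^t(\pi)$ is the set of all partial permutations obtainable from $\pi$ by a sequence of at most $t$ operations, each being either a single tail deletion (removing the first symbol of a partial permutation of length at least $2$) or a single tail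 insertion (prepending an element of $[q]$ not already occurring in it). For $X\in\{\mathrm{del},\mathrm{indel}\}$, a code $\mathcal{C}$ is $t$-tail-$X$-correcting if $\mathcal{B}_X^t(\pi_1)\cap\mathcal{B}_X^t(\pi_2)=\emptyset$ for all distinct $\pi_1,\pi_2\in\mathcal{C}$. *)

(* Defs.v *)
From mathcomp Require Import all_boot.
Set Implicit Arguments. Unset Strict Implicit. Unset Printing Implicit Defensive.

Definition is_pperm (q : nat) (s : seq nat) : Prop :=
  [/\ uniq s, all (fun a => a < q) s & 1 <= size s <= q].

(* A code is a subset of S_all^q, represented as a predicate. *)
Definition is_code (q : nat) (C : seq nat -> Prop) : Prop :=
  forall s, C s -> is_pperm q s.

Definition tail_del (j : nat) (s : seq nat) : seq nat :=
  drop (minn j (size s).-1) s.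

Definition del_ball (t : nat) (pi s : seq nat) : Prop :=
  exists2 j, j <= t & s = tail_del j pi.

Definition indel_step (q : nat) (s s' : seq nat) : Prop :=
  (2 <= size s /\ s' = behead s) \/
  (exists2 a, (a < q) && (a \notin s) & s' = a :: s).

Fixpoint indel_reach (q n : nat) (s s' : seq nat) : Prop :=
  match n with
  | 0 => s' = s
  | n'.+1 => s' = s \/ exists2 s'', indel_step q s s'' & indel_reach q n' s'' s'
  end.

Definition indel_ball (q t : nat) (pi s : seq nat) : Prop := indel_reach q t pi s.

Definition tail_del_correcting (t : nat) (C : seq nat -> Prop) : Prop :=
  forall p1 p2, C p1 -> C p2 -> p1 <> p2 ->
    forall s, ~ (del_ball t p1 s /\ del_ball t p2 s).

Definition tail_indel_correcting (q t : nat) (C : seq nat -> Prop) : Prop :=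
  forall p1 p2, C p1 -> C p2 -> p1 <> p2 ->
    forall s, ~ (indel_ball q t p1 s /\ indel_ball q t p2 s).

(* Main.v *)
Require Import Defs.
From mathcomp Require Import all_boot.
From mathcomp Require Import zify.
Set Implicit Arguments. Unset Strict Implicit.

Lemma reach_form q p n s s' : indel_reach q n s s' ->
  forall u k N, s = u ++ drop k p -> k < size p -> k + size u + n <= N ->
  exists u' k', [/\ s' = u' ++ drop k' p, k' < size p & k' + size u' <= N].
Proof.
elim: n s => [|n IH] s /=.
  move=> -> u k N -> hk hN; exists u, k; split => //; lia.
move=> [->|[s'' hst hr]] u k N hs hk hN.
  exists u, k; split => //; lia.
case: hst => [[h2 e]|[a _ e]]; subst s''.
  case: u hs hN => [|a u] /= hs hN.
    apply: (IH _ hr [::] k.+1 N) => //=.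
    - by rewrite hs -drop1 drop_drop add1n.
    - move: h2; rewrite hs size_drop; lia.
    - lia.
  apply: (IH _ hr u k N) => //; [by rewrite hs | lia].
apply: (IH _ hr (a :: u) k N) => //=; [by rewrite hs | lia].
Qed.

Lemma ball_form q t p s : indel_ball q t p s -> 0 < size p ->
  exists u k, [/\ s = u ++ drop k p, k < size p & k + size u <= t].
Proof.
move=> h hp; apply: (@reach_form q p t p s h [::] 0 t) => //=; by rewrite drop0.
Qed.

Lemma cat_suffix (u1 x1 u2 x2 : seq nat) : u1 ++ x1 = u2 ++ x2 ->
  size x1 <= size x2 -> x1 = drop (size u1 - size u2) x2.
Proof.
move=> e hs.
have hsz : size u1 + size x1 = size u2 + size x2 by rewrite -!size_cat e.
have -> : x1 = drop (size u1) (u1 ++ x1) by rewrite drop_size_cat.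
rewrite e drop_cat ifF; last by apply/negbTE; rewrite -leqNgt; lia.
by [].
Qed.

Lemma meet_del q t p1 p2 s : 0 < size p1 -> 0 < size p2 ->
  indel_ball q t p1 s -> indel_ball q t p2 s ->
  (forall u1 k1 u2 k2, s = u1 ++ drop k1 p1 -> k1 < size p1 -> k1 + size u1 <= t ->
     s = u2 ++ drop k2 p2 -> k2 < size p2 -> k2 + size u2 <= t ->
     size (drop k1 p1) <= size (drop k2 p2) ->
     exists s', del_ball (2 * t) p1 s' /\ del_ball (2 * t) p2 s') .
Proof.
move=> h1 h2 _ _ u1 k1 u2 k2 e1 hk1 ht1 e2 hk2 ht2 hsz.
have e := cat_suffix (etrans (esym e1) e2) hsz.
rewrite drop_drop in e.
have hsz' : size u1 + size (drop k1 p1) = size u2 + size (drop k2 p2)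
  by rewrite -!size_cat -e1 -e2.
move: hsz hsz'; rewrite !size_drop => hsz hsz'.
exists (drop k1 p1); split.
  exists k1; first lia.
  rewrite /tail_del; congr drop; lia.
exists (size u1 - size u2 + k2); first lia.
rewrite /tail_del e; congr drop; lia.
Qed.

Lemma part1a (q t : nat) (C : seq nat -> Prop) : 1 <= q -> is_code q C ->
      tail_del_correcting (2 * t) C -> tail_indel_correcting q t C.
Proof.
move=> _ hC hD p1 p2 c1 c2 ne s [b1 b2].
have s1 : 0 < size p1 by case: (hC _ c1) => _ _ /andP[].
have s2 : 0 < size p2 by case: (hC _ c2) => _ _ /andP[].
have [u1 [k1 [e1 hk1 ht1]]] := ball_form b1 s1.
have [u2 [k2 [e2 hk2 ht2]]] := ball_form b2 s2.
case: (leqP (size (drop k1 p1)) (size (drop k2 p2))) => hs.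
  have [s' [d1 d2]] := meet_del s1 s2 b1 b2 e1 hk1 ht1 e2 hk2 ht2 hs.
  exact: (hD p1 p2 c1 c2 ne s').
have [s' [d2 d1]] := meet_del s2 s1 b2 b1 e2 hk2 ht2 e1 hk1 ht1 (ltnW hs).
apply: (hD p2 p1 c2 c1 (fun h => ne (esym h)) s'); by split.
Qed.

Lemma reach_snoc q n s s' s'' : indel_reach q n s s' -> indel_step q s' s'' ->
  indel_reach q n.+1 s s''.
Proof.
elim: n s => [|n IH] s /=.
  move=> -> h; right; exists s'' => //.
move=> [->|[t1 h1 h2]] h.
  right; exists s'' => //; by left.
right; exists t1 => //; exact: IH.
Qed.

Lemma reach_del q n s : n < size s -> indel_reach q n s (drop n s).
Proof.
elim: n s => [|n IH] s /=; first by rewrite drop0.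
move=> h; right; exists (behead s).
  left; split => //; lia.
have -> : drop n.+1 s = drop n (behead s) by rewrite -drop1 drop_drop addn1.
apply: IH; rewrite size_behead; lia.
Qed.

Lemma reach_ins q s u : uniq (u ++ s) -> all (fun a => a < q) u ->
  indel_reach q (size u) s (u ++ s).
Proof.
elim: u => [|a u IH] /=; first by [].
move=> /andP[ha hu] /andP[hq hall].
apply: reach_snoc (IH hu hall) _.
right; exists a => //; by rewrite hq ha.
Qed.

Definition C1 (s : seq nat) : Prop := s = [:: 0; 1; 2] \/ s = [:: 3; 2].

Lemma ball1 p s : indel_ball 4 1 p s -> 0 < size p ->
  s = p \/ s = drop 1 p \/ exists a, s = a :: p.
Proof.
move=> h hp; have [u [k [-> hk ht]]] := ball_form h hp.
case: u ht => [|a [|b u]] /= ht.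
- case: k hk ht => [|[|k]] hk ht; [left; by rewrite drop0 | by right; left | lia].
- have -> : k = 0 by lia. rewrite drop0; right; right; by exists a.
- lia.
Qed.

Lemma part1b : exists (q t : nat) (C : seq nat -> Prop),
      [/\ 1 <= q, is_code q C, tail_indel_correcting q t C
        & ~ tail_del_correcting (2 * t) C].
Proof.
exists 4, 1, C1; split => //.
- by move=> s [->|->].
- move=> p1 p2 c1 c2 ne s [b1 b2].
  have hp1 : 0 < size p1 by case: c1 => ->.
  have hp2 : 0 < size p2 by case: c2 => ->.
  move: (ball1 b1 hp1) (ball1 b2 hp2).
  case: c1 c2 ne => -> [] -> //= _
    [->|[->|[a ->]]] [e|[e|[b e]]] //.
- move=> hD; apply: (hD [:: 0; 1; 2] [:: 3; 2]); [by left|by right|by []|].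
  split; [exists 2 => //| exists 1 => //].
Qed.

Lemma part2 (t : nat) : 1 <= t ->
     exists (q : nat) (C : seq nat -> Prop),
       [/\ 1 <= q, is_code q C, tail_del_correcting (2 * t - 1) C
         & ~ tail_indel_correcting q t C].
Proof.
move=> ht.
pose p1 := iota 0 (2 * t).+1.
pose p2 := [:: 2 * t].
exists (2 * t).+1, (fun s => s = p1 \/ s = p2); split => //.
- move=> s [->|->]; split.
  + exact: iota_uniq.
  + apply/allP => x; rewrite mem_iota; lia.
  + rewrite /p1 size_iota; lia.
  + by [].
  + rewrite /= andbT; lia.
  + rewrite /=; lia.
- have key : forall s, del_ball (2 * t - 1) p1 s -> del_ball (2 * t - 1) p2 s -> False.
    move=> s [j1 hj1 e1] [j2 hj2 e2].
    have : size s = 1 by rewrite e2.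
    rewrite e1 /tail_del size_drop /p1 size_iota; lia.
  move=> a b [] -> [] -> //= _ s [h1 h2]; [exact: key h1 h2 | exact: key h2 h1].
- move=> hI; apply: (hI p1 p2 _ _ _ (drop t p1)); [by left|by right| move/(congr1 size); rewrite /p1 size_iota /=; lia |].
  split.
    apply: reach_del; rewrite /p1 size_iota; lia.
  have -> : drop t p1 = iota t t ++ p2.
    rewrite /p1.
    have -> : (2 * t).+1 = t + (t + 1) by lia.
    rewrite iotaD drop_size_cat ?size_iota // iotaD /= add0n /p2; congr (_ ++ [:: _]); lia.
  have := @reach_ins (2 * t).+1 p2 (iota t t).
  rewrite size_iota => h; apply: h.
  + have -> : iota t t ++ p2 = iota t t.+1.
      by rewrite -addn1 iotaD /p2; congr (_ ++ [:: _]); lia.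
    exact: iota_uniq.
  + apply/allP => x; rewrite mem_iota; lia.
Qed.

Theorem mainTheorem6 :
  ((forall (q t : nat) (C : seq nat -> Prop), 1 <= q -> is_code q C ->
      tail_del_correcting (2 * t) C -> tail_indel_correcting q t C)
   /\
   (exists (q t : nat) (C : seq nat -> Prop),
      [/\ 1 <= q, is_code q C, tail_indel_correcting q t C
        & ~ tail_del_correcting (2 * t) C]))
  /\
  (forall t : nat, 1 <= t ->
     exists (q : nat) (C : seq nat -> Prop),
       [/\ 1 <= q, is_code q C, tail_del_correcting (2 * t - 1) C
         & ~ tail_indel_correcting q t C]).
Proof.
split; [split; [exact: part1a | exact: part1b] | exact: part2].
Qed.
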